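(* Let $(E,C)$ be a separated graph with $E^0$ and $E^1$ countable, let $S\subseteq C_{fin}$ and let $K$ be a field. In the algebra $L_K(E,C,S)$ the following hold: 1. $e\neq 0$ for each $e\in E^1$; 2. $v\neq 0$ for each $v\in E^0$; 3. $e^*f\neq 0$ for each $e\in X$, $f\in Y$, where $X,Y\in C_v$ with $X\neq Y$; 4. for each finite set $X\in C_v\setminus S$, $\sum_{e\in X}ee^*v=\sum_{e\in X}ee^*=v\sum_{e\in X}ee^*$, but $\sum_{e\in X}ee^*\neq v$; 5. for finite sets $X,Y\in C\setminus S$ with $X\neq Y$, $\sum_{e\in X}ee^*\neq\sum_{f\in Y}ff^*$.
   Context: A separated graph is a pair $(E,C)$ where $E=(E^0,E^1,r,s)$ is a directed graph and $C=\bigcup_{v\in E^0}C_v$, where for each non-sink $v$, $C_v$ is a partition of $s^{-1}(v)$ into pairwise disjoint nonempty sets; $C_{fin}$ is the set of finite $Y\in C$. For $S\subseteq C_{fin}$ and a field $K$, the Cohn-Leavitt algebra $L_K(E,C,S)$ is the universal $K$-algebra generated by pairwise orthogonal idempotents $\{v:v\in E^0\}$ and elements $\{e,e^*:e\in E^1\}$ subject to: $s(e)e=er(e)=e$; $r(e)e^*=e^*s(e)=e^*$; $e^*f=\delta_{e,f}r(e)$ for $e,f\in Y$, $Y\in C$; $v=\sum_{e\in X}ee^*$ for every $X\in S\cap C_v$, $v$ non-sink. *)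

(* Defs.v *)
From HB Require Import structures.
From mathcomp Require Import all_boot all_algebra.
From mathcomp Require Import finmap boolp classical_sets cardinality.
Set Implicit Arguments. Unset Strict Implicit. Unset Printing Implicit Defensive.
Import GRing.Theory.
Local Open Scope ring_scope.
Local Open Scope classical_set_scope.

(* C is a set of subsets of E^1; (E,C) is a separated graph when C is a
   partition of E^1 into nonempty sets each contained in a fibre s^{-1}(v);
   then C_v := {X in C | X ⊆ s^{-1}(v)} is a partition of s^{-1}(v) for every
   non-sink v (and C_v is empty for a sink v), and C = ⋃_v C_v. *)
Definition separated_graph (V Ed : Type) (s : Ed -> V) (C : set (set Ed)) : Prop :=
  [/\ (forall X, C X -> X !=set0),
      (forall X, C X -> forall e f, X e -> X f -> s e = s f),
      (forall X Y, C X -> C Y -> X `&` Y !=set0 -> X = Y)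
    & (forall e, exists X, C X /\ X e)].

Definition Cv (V Ed : Type) (s : Ed -> V) (C : set (set Ed)) (v : V) : set (set Ed) :=
  [set X | C X /\ X `<=` s @^-1` [set v]].

Definition Cfin (Ed : Type) (C : set (set Ed)) : set (set Ed) :=
  [set X | C X /\ finite_set X].

(* Cohn-Leavitt algebras are in general non-unital, so we use associative,
   bilinear (not necessarily unital) K-algebras. *)
Record nuAlg (K : fieldType) := NUAlg {
  nua_sort :> lmodType K;
  nua_mul : nua_sort -> nua_sort -> nua_sort;
  nua_mulA : forall x y z, nua_mul x (nua_mul y z) = nua_mul (nua_mul x y) z;
  nua_mulDl : forall x y z, nua_mul (x + y) z = nua_mul x z + nua_mul y z;
  nua_mulDr : forall x y z, nua_mul x (y + z) = nua_mul x y + nua_mul x z;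
  nua_mulZl : forall (a : K) x y, nua_mul (a *: x) y = a *: nua_mul x y;
  nua_mulZr : forall (a : K) x y, nua_mul x (a *: y) = a *: nua_mul x y
}.

(* Sum over a finite set of edges (fset_set X enumerates X when X is finite). *)
Definition sum_over (K : fieldType) (A : nuAlg K) (Ed : choiceType)
  (X : set Ed) (F : Ed -> A) : A := \sum_(e <- fset_set X) F e.

(* Elements pv v, pe e, pes e (= e^* ) of A satisfy the defining relations of
   L_K(E,C,S). *)
Definition CL_relations (K : fieldType) (V Ed : choiceType)
  (s r : Ed -> V) (C S : set (set Ed)) (A : nuAlg K)
  (pv : V -> A) (pe pes : Ed -> A) : Prop :=
  let m := @nua_mul K A in
  [/\ (forall v, m (pv v) (pv v) = pv v) /\
        (forall v w, v <> w -> m (pv v) (pv w) = 0),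
      (forall e, m (pv (s e)) (pe e) = pe e /\ m (pe e) (pv (r e)) = pe e),
      (forall e, m (pv (r e)) (pes e) = pes e /\ m (pes e) (pv (s e)) = pes e),
      (forall Y e f, C Y -> Y e -> Y f ->
          m (pes e) (pe f) = if e == f then pv (r e) else 0)
    & (forall v X, S X -> Cv s C v X ->
          pv v = sum_over X (fun e => m (pe e) (pes e)))].

Definition nua_hom (K : fieldType) (A B : nuAlg K) (phi : A -> B) : Prop :=
  (forall (a : K) x y, phi (a *: x + y) = a *: phi x + phi y) /\
  (forall x y, phi (nua_mul x y) = nua_mul (phi x) (phi y)).

Definition is_CohnLeavitt (K : fieldType) (V Ed : choiceType)
  (s r : Ed -> V) (C S : set (set Ed)) (A : nuAlg K)
  (pv : V -> A) (pe pes : Ed -> A) : Prop :=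
  CL_relations s r C S pv pe pes /\
  forall (B : nuAlg K) (qv : V -> B) (qe qes : Ed -> B),
    CL_relations s r C S qv qe qes ->
    (exists phi : A -> B, nua_hom phi /\
        (forall v, phi (pv v) = qv v) /\
        (forall e, phi (pe e) = qe e) /\ (forall e, phi (pes e) = qes e)) /\
    (forall phi psi : A -> B, nua_hom phi -> nua_hom psi ->
        (forall v, phi (pv v) = psi (pv v)) ->
        (forall e, phi (pe e) = psi (pe e)) ->
        (forall e, phi (pes e) = psi (pes e)) ->
        forall x, phi x = psi x).

(* Main.v *)
Require Import Defs.
From HB Require Import structures.
From mathcomp Require Import all_boot all_algebra.
From mathcomp Require Import finmap boolp classical_sets cardinality.
Set Implicit Arguments. Unset Strict Implicit. Unset Printing Implicit Defensive.
Import GRing.Theory.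
Local Open Scope ring_scope.
Local Open Scope classical_set_scope.

Definition linD (T : Type) (K : fieldType) (f : (T -> K) -> T -> K) :=
  forall h h', f (fun t => h t + h' t) = fun t => f h t + f h' t.
Definition linZ (T : Type) (K : fieldType) (f : (T -> K) -> T -> K) :=
  forall (a : K) h, f (fun t => a * h t) = fun t => a * f h t.

Record op (T : Type) (K : fieldType) := Op {
  opf :> (T -> K) -> T -> K; opD : linD opf; opZ : linZ opf }.

Lemma op_eq T K (x y : op T K) : opf x = opf y -> x = y.
Proof.
case: x => f1 d1 z1; case: y => f2 d2 z2 /= E; subst f2.
by rewrite (Prop_irrelevance d1 d2) (Prop_irrelevance z1 z2).
Qed.

Section OpDefs.
Variables (T : Type) (K : fieldType).
Implicit Types x y z : op T K.

Definition op0 : op T K.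
Proof. refine (@Op T K (fun _ _ => 0) _ _).
- by move=> h h'; apply: funext => t; rewrite addr0.
- by move=> a h; apply: funext => t; rewrite mulr0.
Defined.

Definition opadd x y : op T K.
Proof. refine (@Op T K (fun h t => x h t + y h t) _ _).
- move=> h h'; apply: funext => t; rewrite (opD x) (opD y).
  by rewrite addrACA.
- by move=> a h; apply: funext => t; rewrite (opZ x) (opZ y) mulrDr.
Defined.

Definition opopp x : op T K.
Proof. refine (@Op T K (fun h t => - x h t) _ _).
- by move=> h h'; apply: funext => t; rewrite (opD x) opprD.
- by move=> a h; apply: funext => t; rewrite (opZ x) mulrN.
Defined.

Definition opscale (a : K) x : op T K.
Proof. refine (@Op T K (fun h t => a * x h t) _ _).
- by move=> h h'; apply: funext => t; rewrite (opD x) mulrDr.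
- by move=> b h; apply: funext => t; rewrite (opZ x) mulrCA.
Defined.

Definition opmul x y : op T K.
Proof. refine (@Op T K (fun h => x (y h)) _ _).
- by move=> h h'; rewrite (opD y) (opD x).
- by move=> a h; rewrite (opZ y) (opZ x).
Defined.
End OpDefs.

HB.instance Definition _ (T : Type) (K : fieldType) := gen_eqMixin (op T K).
HB.instance Definition _ (T : Type) (K : fieldType) := gen_choiceMixin (op T K).

Section OpZ.
Variables (T : Type) (K : fieldType).
Lemma opaddA : associative (@opadd T K).
Proof. by move=> x y z; apply: op_eq; apply: funext=> h; apply: funext=> t /=; rewrite addrA. Qed.
Lemma opaddC : commutative (@opadd T K).
Proof. by move=> x y; apply: op_eq; apply: funext=> h; apply: funext=> t /=; rewrite addrC. Qed.
Lemma opadd0 : left_id (@op0 T K) (@opadd T K).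
Proof. by move=> x; apply: op_eq; apply: funext=> h; apply: funext=> t /=; rewrite add0r. Qed.
Lemma opaddN : left_inverse (@op0 T K) (@opopp T K) (@opadd T K).
Proof. by move=> x; apply: op_eq; apply: funext=> h; apply: funext=> t /=; rewrite addNr. Qed.
End OpZ.

HB.instance Definition _ (T : Type) (K : fieldType) := GRing.isZmodule.Build (op T K)
  (@opaddA T K) (@opaddC T K) (@opadd0 T K) (@opaddN T K).

Section OpL.
Variables (T : Type) (K : fieldType).
Lemma opscaleA (a b : K) (v : op T K) : opscale a (opscale b v) = opscale (a * b) v.
Proof. by apply: op_eq; apply: funext=> h; apply: funext=> t /=; rewrite mulrA. Qed.
Lemma opscale1 : left_id 1 (@opscale T K).
Proof. by move=> x; apply: op_eq; apply: funext=> h; apply: funext=> t /=; rewrite mul1r. Qed.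
Lemma opscaleDr : right_distributive (@opscale T K) +%R.
Proof. by move=> a x y; apply: op_eq; apply: funext=> h; apply: funext=> t /=; rewrite mulrDr. Qed.
Lemma opscaleDl (v : op T K) : {morph (@opscale T K)^~ v: a b / a + b}.
Proof. by move=> a b; apply: op_eq; apply: funext=> h; apply: funext=> t /=; rewrite mulrDl. Qed.
End OpL.

HB.instance Definition _ (T : Type) (K : fieldType) := GRing.Zmodule_isLmodule.Build K (op T K)
  (@opscaleA T K) (@opscale1 T K) (@opscaleDr T K) (@opscaleDl T K).

Section OpAlg.
Variables (T : Type) (K : fieldType).
Implicit Types x y z : op T K.
Lemma opmulA x y z : opmul x (opmul y z) = opmul (opmul x y) z.
Proof. by apply: op_eq. Qed.
Lemma opmulDl x y z : opmul (x + y) z = opmul x z + opmul y z.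
Proof. by apply: op_eq. Qed.
Lemma opmulDr x y z : opmul x (y + z) = opmul x y + opmul x z.
Proof. by apply: op_eq; apply: funext=> h /=; rewrite (opD x). Qed.
Lemma opmulZl (a : K) x y : opmul (a *: x) y = a *: opmul x y.
Proof. by apply: op_eq. Qed.
Lemma opmulZr (a : K) x y : opmul x (a *: y) = a *: opmul x y.
Proof. by apply: op_eq; apply: funext=> h /=; rewrite (opZ x). Qed.
Definition opA : nuAlg K := @NUAlg K (op T K) (@opmul T K) opmulA opmulDl opmulDr opmulZl opmulZr.
End OpAlg.



Section Pg.
Variables (T : Type) (K : fieldType).
Definition Pg (g : T -> option T) : op T K.
Proof. refine (@Op T K (fun h t => if g t is Some u then h u else 0) _ _).
- by move=> h h'; apply: funext => t; case: (g t) => [u|] //; rewrite addr0.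
- by move=> a h; apply: funext => t; case: (g t) => [u|] //; rewrite mulr0.
Defined.

Lemma Pg_mul g g' : opmul (Pg g) (Pg g') = Pg (fun t => obind g' (g t)).
Proof. by apply: op_eq; apply: funext=> h; apply: funext=> t /=; case: (g t). Qed.

Lemma Pg_ext g g' : g =1 g' -> Pg g = Pg g'.
Proof. by move=> E; apply: op_eq; apply: funext=> h; apply: funext=> t /=; rewrite E. Qed.

Lemma Pg0 : Pg (fun _ => None) = 0.
Proof. by apply: op_eq. Qed.

Lemma opsum (I : Type) (l : seq I) (F : I -> op T K) h t :
  opf (\sum_(i <- l) F i) h t = \sum_(i <- l) opf (F i) h t.
Proof.
elim: l => [|a l IH]; first by rewrite !big_nil.
by rewrite !big_cons -IH.
Qed.

Lemma Pg_neq0 g t u : g t = Some u -> Pg g <> 0.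
Proof.
move=> E H; have := congr1 (fun x : op T K => opf x (fun _ => 1) t) H.
by rewrite /= E => /eqP; rewrite oner_eq0.
Qed.
End Pg.
Arguments Pg {T K} g.



Section Model.
Variables (V Ed : countType) (s r : Ed -> V) (C S : set (set Ed)) (K : fieldType).
Hypotheses (HG : separated_graph s C) (HS : S `<=` Cfin C).

Definition Ye (e : Ed) : set Ed :=
  match pselect (exists X, C X /\ X e) with
  | left p => proj1_sig (cid p) | right _ => set0 end.

Lemma YeP X e : C X -> X e -> Ye e = X.
Proof.
move=> CX Xe; rewrite /Ye; case: pselect => [p|np]; last by exfalso; apply: np; exists X.
case: (cid p) => Y [CY Ye'] /=; case: HG => _ _ H3 _.
by apply: H3 => //; exists e.
Qed.

Lemma YeC e : C (Ye e) /\ Ye e e.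
Proof. case: HG => _ _ _ /(_ e) [X [CX Xe]]; by rewrite (YeP CX Xe). Qed.

Definition Coord := set Ed -> nat -> option Ed.
Definition T := (V * Coord)%type.
Definition valid (b : Coord) := forall Y, S Y -> forall n, exists e, b Y n = Some e /\ Y e.
Definition vb b := `[< valid b >].
Definition upd (b : Coord) Y x : Coord := fun Z => if pselect (Z = Y) then x else b Z.
Definition scons (x : option Ed) (st : nat -> option Ed) n := if n is n'.+1 then st n' else x.

Lemma upd_same b Y x : upd b Y x Y = x.
Proof. by rewrite /upd; case: pselect. Qed.
Lemma upd_other b Y x Z : Z <> Y -> upd b Y x Z = b Z.
Proof. by rewrite /upd; case: pselect. Qed.
Lemma upd_id b Y : upd b Y (b Y) = b.
Proof. by apply: funext => Z; rewrite /upd; case: pselect => [E|_] /=; [by rewrite E | by []]. Qed.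
Lemma upd_upd b Y x x' : upd (upd b Y x) Y x' = upd b Y x'.
Proof. by apply: funext => Z; rewrite /upd; case: pselect. Qed.

Lemma valid_upd b Y x : valid b -> (S Y -> forall n, exists e, x n = Some e /\ Y e) ->
  valid (upd b Y x).
Proof.
move=> vb0 hx Z SZ n; rewrite /upd; case: pselect => [E|_] /=.
  by move: SZ; rewrite E => SZ; exact: hx.
exact: vb0.
Qed.

Lemma valid_tl b Y : valid b -> valid (upd b Y (fun n => b Y n.+1)).
Proof. by move=> v; apply: valid_upd => // SY n; apply: v. Qed.

Lemma valid_cons b e : valid b -> valid (upd b (Ye e) (scons (Some e) (b (Ye e)))).
Proof.
move=> v; apply: valid_upd => // SY [|n] /=; last exact: v.
by exists e; split => //; case: (YeC e).
Qed.

Definition b0 : Coord := fun Z _ =>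
  match pselect (exists x, Z x) with left p => Some (proj1_sig (cid p)) | right _ => None end.

Lemma valid_b0 : valid b0.
Proof.
move=> Y SY n; rewrite /b0; case: pselect => [p|np].
  by case: (cid p) => x Yx /=; exists x.
exfalso; apply: np; case: HG => H1 _ _ _; apply: H1; exact: (HS SY).1.
Qed.

Definition gv (v : V) (t : T) : option T :=
  if (t.1 == v) && vb t.2 then Some t else None.
Definition ges (e : Ed) (t : T) : option T :=
  if (t.1 == r e) && vb t.2 then Some (s e, upd t.2 (Ye e) (scons (Some e) (t.2 (Ye e))))
  else None.
Definition ge (e : Ed) (t : T) : option T :=
  if [&& t.1 == s e, vb t.2 & t.2 (Ye e) 0 == Some e] then
    Some (r e, upd t.2 (Ye e) (fun n => t.2 (Ye e) n.+1)) else None.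

Definition qv v : op T K := Pg (gv v).
Definition qe e : op T K := Pg (ge e).
Definition qes e : op T K := Pg (ges e).

Lemma vbP b : reflect (valid b) (vb b).
Proof. exact: asboolP. Qed.

Lemma termP e h (w : V) b :
  opf (opmul (qe e) (qes e)) h (w, b) =
  if [&& w == s e, vb b & b (Ye e) 0 == Some e] then h (w, b) else 0.
Proof.
rewrite /qe /qes Pg_mul /= /ge /=.
case H: [&& w == s e, vb b & b (Ye e) 0 == Some e] => //=.
move/and3P: H => [/eqP -> /vbP vbb /eqP hd].
rewrite /ges /= eqxx /=.
have -> : vb (upd b (Ye e) (fun n => b (Ye e) n.+1)) by apply/vbP; exact: valid_tl.
rewrite /= upd_same upd_upd.
have -> : scons (Some e) (fun n => b (Ye e) n.+1) = b (Ye e).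
  by apply: funext => -[|n] //=; rewrite hd.
by rewrite upd_id.
Qed.

Lemma model_rel : CL_relations s r C S (A := opA T K) qv qe qes.
Proof.
split.
- split.
  + move=> v; rewrite /= /qv Pg_mul; apply: Pg_ext => -[w b]; rewrite /gv /=.
    by case: ifP => //= ->.
  + move=> v w vw; rewrite /= /qv Pg_mul -(Pg0 T K); apply: Pg_ext => -[u b]; rewrite /gv /=.
    case: (u =P v) => //= -> ; case: (vb b) => //=.
    by case: (v =P w).
- move=> e; split; rewrite /= /qv /qe Pg_mul; apply: Pg_ext => -[w b];
    rewrite /gv /ge /=.
  + by case E: (w == s e); case F: (vb b) => //=; rewrite ?E ?F.
  + case H: [&& w == s e, vb b & b (Ye e) 0 == Some e] => //=.
    rewrite eqxx /=.
    by have -> : vb (upd b (Ye e) (fun n => b (Ye e) n.+1))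
      by apply/vbP; apply: valid_tl; move/and3P: H => [_ /vbP ? _].
- move=> e; split; rewrite /= /qv /qes Pg_mul; apply: Pg_ext => -[w b];
    rewrite /gv /ges /=.
  + by case E: (w == r e); case F: (vb b) => //=; rewrite ?E ?F.
  + case H: ((w == r e) && vb b) => //=.
    rewrite eqxx /=.
    by have -> : vb (upd b (Ye e) (scons (Some e) (b (Ye e))))
      by apply/vbP; apply: valid_cons; move/andP: H => [_ /vbP].
- move=> Y e f CY Ye' Yf; rewrite /= /qes /qe Pg_mul.
  have YeY := YeP CY Ye'; have YfY := YeP CY Yf.
  have sef : s e = s f by case: HG => _ H2 _ _; exact: H2 Y CY e f Ye' Yf.
  case: (e =P f) => [<-|nef].
  + rewrite /qv; apply: Pg_ext => -[w b]; rewrite /gv /ges /ge /=.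
    case H: ((w == r e) && vb b) => //=.
    move/andP: H => [/eqP -> /vbP vb1].
    have -> : vb (upd b (Ye e) (scons (Some e) (b (Ye e)))) by apply/vbP; exact: valid_cons.
    by rewrite eqxx /= upd_same /= eqxx upd_upd upd_id.
  + rewrite -(Pg0 T K); apply: Pg_ext => -[w b]; rewrite /ges /ge /=.
    case H: ((w == r e) && vb b) => //=.
    rewrite YfY -YeY upd_same /=.
    case: andP => //= -[_ /andP [_ /eqP [E]]]; by exfalso; apply: nef.
- move=> v X SX [CX Xv]; have fX := (HS SX).2.
  apply: op_eq; apply: funext => h; apply: funext => -[w b].
  rewrite /sum_over opsum.
  under eq_big_seq => e eX.
    rewrite termP.
    have Xe : X e by move: eX; rewrite in_fset_set // inE.
    have -> : s e = v by exact: (Xv e Xe).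
    rewrite (YeP CX Xe).
  over.
  rewrite /= /gv /=.
  case H: ((w == v) && vb b).
  + move/andP: H => [-> /vbP vb1] /=.
    have [e0 [hd Xe0]] := vb1 X SX 0.
    have vbb : vb b by apply/vbP.
    rewrite vbb hd (bigD1_seq e0) /=; last exact: fset_uniq.
      rewrite eqxx big1 ?addr0 // => e /negPf ne.
      by case: eqP => // -[E]; rewrite E eqxx in ne.
    by rewrite in_fset_set // inE.
  + rewrite big1 // => e _; move: H; case: (w == v) => //=; by move ->.
Qed.

Lemma qe_neq0 e : qe e <> 0.
Proof.
apply: (@Pg_neq0 _ _ _ (s e, upd b0 (Ye e) (scons (Some e) (b0 (Ye e))))
  (r e, upd (upd b0 (Ye e) (scons (Some e) (b0 (Ye e)))) (Ye e)
        (fun n => upd b0 (Ye e) (scons (Some e) (b0 (Ye e))) (Ye e) n.+1))).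
rewrite /ge /= eqxx upd_same /= eqxx andbT.
by have -> : vb (upd b0 (Ye e) (scons (Some e) (b0 (Ye e))))
  by apply/vbP; apply: valid_cons; exact: valid_b0.
Qed.

Lemma qv_neq0 v : qv v <> 0.
Proof.
apply: (@Pg_neq0 _ _ _ (v, b0) (v, b0)).
by rewrite /gv /= eqxx; have -> : vb b0 by apply/vbP; exact: valid_b0.
Qed.

Lemma Cv_src v X e : Cv s C v X -> X e -> s e = v.
Proof. by move=> [_ H] Xe; exact: H e Xe. Qed.

Lemma qesqe_neq0 v X Y e f : Cv s C v X -> Cv s C v Y -> X <> Y -> X e -> Y f ->
  opmul (qes e) (qe f) <> 0.
Proof.
move=> CvX CvY XY Xe Yf.
have YeX := YeP CvX.1 Xe; have YfY := YeP CvY.1 Yf.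
set b := upd b0 Y (scons (Some f) (b0 Y)).
have vb1 : valid b by rewrite /b -YfY; apply: valid_cons; exact: valid_b0.
set b' := upd b X (scons (Some e) (b X)).
have vb2 : valid b' by rewrite /b' -YeX; apply: valid_cons.
rewrite /qes /qe Pg_mul.
apply: (@Pg_neq0 _ _ _ (r e, b) (r f, upd b' Y (fun n => b' Y n.+1))).
rewrite /ges /= eqxx.
have -> : vb b by apply/vbP.
rewrite /= YeX -/b' /ge /= YfY.
have -> : vb b' by apply/vbP.
rewrite (Cv_src CvX Xe) (Cv_src CvY Yf) eqxx /=.
rewrite /b' upd_other; last by move=> E; apply: XY.
by rewrite /b upd_same /= eqxx.
Qed.

Lemma sum_none X w b : C X -> finite_set X -> b X 0 = None ->
  opf (\sum_(e <- fset_set X) opmul (qe e) (qes e)) (fun _ => 1) (w, b) = 0.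
Proof.
move=> CX fX hb; rewrite opsum big_seq big1 // => e eX.
have Xe : X e by move: eX; rewrite in_fset_set // inE.
by rewrite termP (YeP CX Xe) hb /= !andbF.
Qed.

Lemma sum_one X e0 b : C X -> finite_set X -> X e0 -> valid b -> b X 0 = Some e0 ->
  opf (\sum_(e <- fset_set X) opmul (qe e) (qes e)) (fun _ => 1) (s e0, b) = 1.
Proof.
move=> CX fX Xe0 vb1 hb; rewrite opsum.
have vbb : vb b by apply/vbP.
rewrite (bigD1_seq e0); first last.
- exact: fset_uniq.
- by rewrite in_fset_set // inE.
rewrite termP eqxx vbb (YeP CX Xe0) hb eqxx.
rewrite big_seq_cond big1; first by rewrite /= addr0.
move=> e /andP [eX ne].
have Xe : X e by move: eX; rewrite in_fset_set // inE.
rewrite termP (YeP CX Xe) hb.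
case: (Some e0 =P Some e) => [[E]|_]; first by rewrite E eqxx in ne.
by rewrite !andbF.
Qed.
End Model.




Section NU.
Variables (K : fieldType) (A : nuAlg K).
Lemma nmul0l (y : A) : nua_mul 0 y = 0.
Proof. apply: (addrI (nua_mul 0 y)); by rewrite -nua_mulDl !addr0. Qed.
Lemma nmul0r (y : A) : nua_mul y 0 = 0.
Proof. apply: (addrI (nua_mul y 0)); by rewrite -nua_mulDr !addr0. Qed.
Lemma nmul_suml (I : Type) (l : seq I) (F : I -> A) y :
  nua_mul (\sum_(i <- l) F i) y = \sum_(i <- l) nua_mul (F i) y.
Proof. elim: l => [|a l IH]; by rewrite ?big_nil ?nmul0l // !big_cons nua_mulDl IH. Qed.
Lemma nmul_sumr (I : Type) (l : seq I) (F : I -> A) y :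
  nua_mul y (\sum_(i <- l) F i) = \sum_(i <- l) nua_mul y (F i).
Proof. elim: l => [|a l IH]; by rewrite ?big_nil ?nmul0r // !big_cons nua_mulDr IH. Qed.
End NU.

Theorem corollary3p5 (V Ed : countType) (s r : Ed -> V) (C S : set (set Ed))
  (K : fieldType) (A : nuAlg K) (pv : V -> A) (pe pes : Ed -> A) :
  separated_graph s C ->
  S `<=` Cfin C ->
  is_CohnLeavitt s r C S pv pe pes ->
  let m := @nua_mul K A in
  let q X := sum_over X (fun e => m (pe e) (pes e)) in
  [/\ (forall e, pe e <> 0),
      (forall v, pv v <> 0),
      (forall v X Y e f, Cv s C v X -> Cv s C v Y -> X <> Y -> X e -> Y f ->
          m (pes e) (pe f) <> 0),
      (forall v X, Cv s C v X -> finite_set X -> ~ S X ->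
          [/\ m (q X) (pv v) = q X, q X = m (pv v) (q X) & q X <> pv v])
    & (forall X Y, C X -> C Y -> finite_set X -> finite_set Y -> ~ S X -> ~ S Y ->
          X <> Y -> q X <> q Y)].
Proof.
move=> HG HS [Hrel Huniv] m q.
have [[phi [[phiL phiM] [phv [phe phes]]]] _] := Huniv _ _ _ _ (model_rel r K HG HS).
have phi0 : phi 0 = 0.
  have H := phiL 1 0 0; rewrite scaler0 addr0 scale1r in H.
  by apply: (addrI (phi 0)); rewrite addr0 -H.
have phiD x y : phi (x + y) = phi x + phi y by have := phiL 1 x y; rewrite !scale1r.
have phisum (l : seq Ed) (F : Ed -> A) : phi (\sum_(i <- l) F i) = \sum_(i <- l) phi (F i).
  by elim: l => [|a l IH]; rewrite ?big_nil // !big_cons phiD IH.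
have phiq X : phi (q X) = \sum_(e <- fset_set X) opmul (qe s r C S K e) (qes s r C S K e).
  by rewrite /q /sum_over phisum; apply: eq_bigr => e _; rewrite phiM phe phes.
have phiM' : forall x y, phi (m x y) = opmul (phi x) (phi y) := phiM.
case: (Hrel) => [[Hvv Hvw] Hse Hre Hee Hsum].
split.
- by move=> e E; apply: (qe_neq0 (r := r) (K := K) HG HS (e := e)); rewrite -phe E phi0.
- by move=> v E; apply: (qv_neq0 (K := K) HG HS (v := v)); rewrite -phv E phi0.
- move=> v X Y e f CvX CvY XY Xe Yf E.
  apply: (qesqe_neq0 (K := K) (r := r) HG HS CvX CvY XY Xe Yf).
  by rewrite -phe -phes -phiM' E phi0.
- move=> v X CvX fX nSX; split.
  + rewrite /q /m /sum_over nmul_suml; apply: eq_big_seq => e eX.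
    have Xe : X e by move: eX; rewrite in_fset_set // inE.
    rewrite -nua_mulA -(Cv_src CvX Xe); by case: (Hre e) => _ ->.
  + rewrite /q /m /sum_over nmul_sumr; apply: eq_big_seq => e eX.
    have Xe : X e by move: eX; rewrite in_fset_set // inE.
    rewrite nua_mulA -(Cv_src CvX Xe); by case: (Hse e) => -> _.
  + move=> E; have := congr1 phi E; rewrite phiq phv => E2.
    set b := upd (@b0 Ed) X (fun _ => None).
    have vbX : vb S b.
      apply/vbP; apply: valid_upd; first by move=> Z SZ n; exact: valid_b0 HG HS Z SZ n.
      by move=> SX0; exfalso; exact: nSX SX0.
    have := congr1 (fun x : op (T V Ed) K => opf x (fun _ => 1) (v, b)) E2.
    rewrite (sum_none r S K HG v CvX.1 fX); last by rewrite /b upd_same.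
    rewrite /= /gv /= eqxx vbX /=.
    by move=> /eqP; rewrite eq_sym oner_eq0.
- move=> X Y CX CY fX fY nSX nSY XY E.
  have := congr1 phi E; rewrite !phiq => E2.
  case: (HG) => H1 _ _ _; have [e Xe] := H1 X CX.
  set b := upd (upd (@b0 Ed) Y (fun _ => None)) X (fun _ => Some e).
  have vbb : valid S b.
    apply: valid_upd; last by move=> SX0; exfalso; exact: nSX SX0.
    apply: valid_upd; last by move=> SY0; exfalso; exact: nSY SY0.
    by move=> Z SZ n; exact: valid_b0 HG HS Z SZ n.
  have := congr1 (fun x : op (T V Ed) K => opf x (fun _ => 1) (s e, b)) E2.
  rewrite /= (sum_one r K HG CX fX Xe vbb); last by rewrite /b upd_same.
  rewrite sum_none //; first by move=> /eqP; rewrite oner_eq0.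
  by rewrite /b upd_other ?upd_same // => E3; apply: XY.
Qed.
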